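(* There exists a planar graph $G_2$ such that for every star forest $F$ in $G_2$ (a subgraph of $G_2$ each of whose components is a star), the graph $G_2-E(F)$ contains $K_4$ as a subgraph (and hence is not $3$-colourable). *)

(* Defs.v *)
From HB Require Import structures.
From mathcomp Require Import all_boot all_order all_algebra.
From mathcomp Require Import all_classical all_reals all_analysis.
From mathcomp Require Import Rstruct Rstruct_topology.
Set Implicit Arguments. Unset Strict Implicit. Unset Printing Implicit Defensive.
Import Order.TTheory GRing.Theory Num.Theory.
Local Open Scope ring_scope.
Local Open Scope classical_set_scope.

Definition simple_graph (T : finType) (e : rel T) : Prop :=
  symmetric e /\ irreflexive e.

Definition Rr := Rdefinitions.R.
Definition point := (Rr * Rr)%type.

Definition planar (T : finType) (e : rel T) : Prop :=
  exists (pos : T -> point) (arc : T -> T -> Rr -> point),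
    injective pos /\
    (forall x y, e x y ->
       [/\ {within `[0%R, 1%R], continuous (arc x y)},
           arc x y 0%R = pos x /\ arc x y 1%R = pos y,
           (forall s t : Rr, (0 <= s <= 1)%R -> (0 <= t <= 1)%R ->
              arc x y s = arc x y t -> s = t),
           (forall t : Rr, arc y x t = arc x y (1 - t)%R) &
           (forall (t : Rr) (z : T), (0 < t < 1)%R -> arc x y t <> pos z)]) /\
    (forall x y u v, e x y -> e u v ->
       ~ ((x == u) && (y == v) || (x == v) && (y == u)) ->
       forall s t : Rr, (0 < s < 1)%R -> (0 < t < 1)%R ->
         arc x y s <> arc u v t).

Definition edge_subgraph (T : finType) (e f : rel T) : Prop :=
  symmetric f /\ (forall x y, f x y -> e x y).

(* A star forest F in G: a subgraph each of whose components is a star, i.e.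
   every component has a centre vertex incident with all its edges.
   (Isolated vertices of F are trivial stars and do not affect E(F).) *)
Definition star_forest (T : finType) (e f : rel T) : Prop :=
  edge_subgraph e f /\
  forall x : T, exists c : T,
    forall u v : T, connect f x u -> f u v -> (u == c) || (v == c).

Definition delete_edges (T : finType) (e f : rel T) : rel T :=
  fun x y => e x y && ~~ f x y.

Definition contains_K4 (T : finType) (g : rel T) : Prop :=
  exists k : 'I_4 -> T, injective k /\ forall i j : 'I_4, i != j -> g (k i) (k j).

(* Main.v *)
Require Import Defs.
From HB Require Import structures.
From Stdlib Require Import Rdefinitions.
From mathcomp Require Import all_boot all_order all_algebra.
From mathcomp Require Import all_classical all_reals all_analysis.
From mathcomp Require Import Rstruct Rstruct_topology.
From mathcomp Require Import zify.
From Stdlib Require Import ZArith NArith Reals Lra.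
Set Implicit Arguments. Unset Strict Implicit. Unset Printing Implicit Defensive.
Import Order.TTheory GRing.Theory Num.Theory.
Import numFieldNormedType.Exports.

Section Geo.
Local Open Scope ring_scope.
Local Open Scope ring_scope.
Local Open Scope classical_set_scope.
Definition seg (p q : Defs.point) (t : Rr) : Defs.point :=
  (Rplus p.1 (Rmult t (Rminus q.1 p.1)), Rplus p.2 (Rmult t (Rminus q.2 p.2))).

Lemma lin_cont0 (R : realType) (a b : R) : continuous (fun t : R => a + t * b).
Proof.
move=> t; apply: cvgD; first exact: cvg_cst.
by apply: cvgM; [exact: cvg_id | exact: cvg_cst].
Qed.
Lemma lin_cont (a b : Rdefinitions.R) : continuous (fun t : Rdefinitions.R => a + t * b).
Proof. exact: lin_cont0. Qed.
Lemma pc (a b c d : Rdefinitions.R) : continuous (fun t : Rdefinitions.R => (a + t * b, c + t * d)).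
Proof. move=> t. apply: (@cvg_pair _ _ _ _ _ _ (nbhs_filter t) (nbhs_filter _) (nbhs_filter _)). exact: lin_cont. exact: lin_cont. Qed.

Lemma seg_cont (p q : Defs.point) : {within `[0%R, 1%R], continuous (seg p q)}.
Proof.
apply: continuous_subspaceT; exact: pc.
Qed.

Open Scope R_scope.
Definition orient (p q r : Defs.point) : R :=
  (q.1 - p.1) * (r.2 - p.2) - (q.2 - p.2) * (r.1 - p.1).

Definition okR (p q r s : Defs.point) : Prop :=
  (0 <= orient p q r /\ 0 <= orient p q s /\ 0 < orient p q r + orient p q s) \/
  (orient p q r <= 0 /\ orient p q s <= 0 /\ orient p q r + orient p q s < 0).

Lemma seg_disj p q r s (s0 t0 : R) : 0 < t0 < 1 -> okR p q r s ->
  seg p q s0 <> seg r s t0.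
Proof.
move=> Ht Hok E.
have H1 : orient p q (seg p q s0) = 0 by rewrite /orient /seg /=; ring.
have H2 : orient p q (seg r s t0) = (1 - t0) * orient p q r + t0 * orient p q s
  by rewrite /orient /seg /=; ring.
rewrite E H2 in H1.
case: Ht => Ht1 Ht2.
case: Hok => [[h1 [h2 h3]]|[h1 [h2 h3]]].
- case: (Rle_lt_or_eq_dec _ _ h1) => ha.
  + have : 0 < (1 - t0) * orient p q r by apply: Rmult_lt_0_compat; lra.
    have : 0 <= t0 * orient p q s by apply: Rmult_le_pos; lra.
    lra.
  + have : 0 < t0 * orient p q s by apply: Rmult_lt_0_compat; lra.
    rewrite -ha in H1. lra.
- case: (Rle_lt_or_eq_dec _ _ h1) => ha.
  + have : 0 < (1 - t0) * - orient p q r by apply: Rmult_lt_0_compat; lra.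
    have : 0 <= t0 * - orient p q s by apply: Rmult_le_pos; lra.
    lra.
  + have : 0 < t0 * - orient p q s by apply: Rmult_lt_0_compat; lra.
    rewrite ha in H1. lra.
Qed.

Lemma seg_vert p q z (t0 : R) : orient p q z <> 0 -> seg p q t0 <> z.
Proof.
move=> Ho E; apply: Ho; rewrite -E /orient /seg /=; ring.
Qed.

Lemma seg_rev p q t : seg q p t = seg p q (1 - t).
Proof. rewrite /seg /=; f_equal; ring. Qed.

Lemma seg0 p q : seg p q 0 = p.
Proof. case: p => a b; rewrite /seg /=; f_equal; ring. Qed.
Lemma seg1 p q : seg p q 1 = q.
Proof. case: p => a b; case: q => c d; rewrite /seg /=; f_equal; ring. Qed.

Lemma seg_inj p q s t : p <> q -> seg p q s = seg p q t -> s = t.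
Proof.
case: p => a b; case: q => c d /= Hne [E1 E2].
have F1 : (s - t) * (c - a) = 0 by lra.
have F2 : (s - t) * (d - b) = 0 by lra.
case: (Rmult_integral _ _ F1) => [|h1]; first lra.
case: (Rmult_integral _ _ F2) => [|h2]; first lra.
exfalso; apply: Hne; f_equal; lra.
Qed.

Lemma seg_end_p p q t : p <> q -> 0 < t -> seg p q t <> p.
Proof.
move=> Hne Ht E; have := @seg_inj p q t 0 Hne; rewrite seg0 => /(_ E); lra.
Qed.
Lemma seg_end_q p q t : p <> q -> t < 1 -> seg p q t <> q.
Proof.
move=> Hne Ht E; have := @seg_inj p q t 1 Hne; rewrite seg1 => /(_ E); lra.
Qed.

End Geo.

Local Close Scope R_scope.
Local Close Scope ring_scope.
Local Close Scope classical_set_scope.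
Local Open Scope nat_scope.

Definition Elist : seq (nat * nat) := [:: (0,1); (0,2); (0,3); (0,4); (0,5); (0,6); (0,7); (0,9); (0,10); (0,15); (0,16); (0,17); (0,38); (0,39); (0,40); (0,41); (0,43); (0,44); (0,46); (1,2); (1,3); (1,4); (1,5); (1,6); (1,8); (1,11); (1,12); (1,14); (1,20); (1,21); (1,22); (1,24); (1,27); (1,28); (1,29); (1,36); (2,3); (2,20); (2,21); (2,22); (2,23); (2,25); (2,26); (2,30); (2,33); (2,34); (2,38); (2,39); (2,40); (2,42); (2,47); (2,48); (2,49); (3,4); (3,11); (3,12); (3,13); (3,15); (3,18); (3,20); (3,30); (3,31); (3,36); (3,37); (3,38); (3,43); (3,44); (3,45); (3,47); (3,48); (3,50); (4,5); (4,8); (4,9); (4,11); (4,13); (4,14); (4,15); (4,16); (4,17); (4,18); (4,19); (5,6); (5,7); (5,8); (5,9); (5,10); (6,7); (9,10); (11,12); (11,13); (11,14); (15,16); (15,18); (15,19); (16,17); (18,19); (20,21); (20,25); (20,27); (20,28); (20,30); (20,31); (20,32); (20,33); (20,34); (20,35); (20,36); (20,37); (21,22); (21,23); (21,24); (21,25); (21,26); (21,27); (21,29); (22,23); (22,24); (25,26); (27,28); (27,29); (30,31); (30,32); (30,33); (30,35); (31,32); (33,34); (33,35); (36,37); (38,39); (38,41); (38,42); (38,43); (38,45); (38,46); (38,47); (38,49); (38,50); (39,40); (39,41); (39,42); (43,44); (43,45); (43,46); (47,48); (47,49); (47,50)].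
Definition Plist : seq (Z * Z) := [:: (0,0)%Z; (1000000000,0)%Z; (0,1000000000)%Z; (333333333,333333333)%Z; (393939393,121212121)%Z; (420875420,26936026)%Z; (546490546,10360010)%Z; (297651066,11475703)%Z; (558922558,43771043)%Z; (291005290,52910052)%Z; (194149284,21776203)%Z; (598484848,155303030)%Z; (612878787,179924242)%Z; (437121211,195075757)%Z; (668831168,87662337)%Z; (254079253,149184149)%Z; (249237940,103998565)%Z; (247220727,85171238)%Z; (326673325,191808191)%Z; (319965747,156415013)%Z; (527777777,361111111)%Z; (469907407,483796296)%Z; (488425925,493767806)%Z; (320987653,660018993)%Z; (583333332,391025640)%Z; (360449735,578703703)%Z; (297701719,660300925)%Z; (624131944,316840277)%Z; (698350694,239496527)%Z; (621977880,339184670)%Z; (344444444,477777777)%Z; (409027777,379861110)%Z; (427083332,406249999)%Z; (290740740,612962962)%Z; (271212120,662121211)%Z; (399768517,467824073)%Z; (524999999,274999999)%Z; (471428570,328571428)%Z; (133333333,533333333)%Z; (24242424,460606060)%Z; (4407713,447382920)%Z; (61616161,337373737)%Z; (71515151,658787878)%Z; (116666666,216666666)%Z; (121794871,160256409)%Z; (212499999,370833332)%Z; (83333333,249999999)%Z; (206666666,526666666)%Z; (134999999,714999999)%Z; (113333333,686666666)%Z; (255333332,431333332)%Z].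
Definition nV := 51.
Definition nE := size Elist.
Definition adjn (u v : nat) : bool := ((u,v) \in Elist) || ((v,u) \in Elist).
Definition nbrs (v : nat) : seq nat := [seq u <- iota 0 nV | adjn v u].
Definition idx (u v : nat) : nat := index (minn u v, maxn u v) Elist.
Definition lit := (bool * N)%type.
Definition evar_raw (u v : nat) : N := N.of_nat (idx u v).
Definition dvar_raw (v : nat) : N := N.of_nat (nE + v).
Fact evar_key : unit. Proof. exact: tt. Qed.
Fact dvar_key : unit. Proof. exact: tt. Qed.
Definition evar := locked_with evar_key evar_raw.
Definition dvar := locked_with dvar_key dvar_raw.
Definition quads : seq (nat * nat * nat * nat) :=
  flatten [seq flatten [seq flatten [seq [seq (a,b,c,d) | d <- nbrs a & (c < d) && adjn b d && adjn c d]
     | c <- nbrs a & (b < c) && adjn b c] | b <- nbrs a & a < b] | a <- iota 0 nV].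
Section Gen.
Variables (evar : nat -> nat -> N) (dvar : nat -> N).
Definition k4clG : seq (seq lit) :=
  [seq let: (a,b,c,d) := q in [:: (true, evar a b); (true, evar a c); (true, evar a d);
        (true, evar b c); (true, evar b d); (true, evar c d)] | q <- quads].
Definition pathclG : seq (seq lit) :=
  flatten [seq flatten [seq [seq [:: (false, evar u v); (false, evar v w); (true, dvar v)]
     | w <- nbrs v & u < w] | u <- nbrs v] | v <- iota 0 nV].
Definition edgeclG : seq (seq lit) :=
  [seq [:: (false, evar p.1 p.2); (false, dvar p.1); (false, dvar p.2)] | p <- Elist].
Definition mkCNF := k4clG ++ pathclG ++ edgeclG.
End Gen.
Definition CNF := mkCNF evar dvar.
Definition CNFr := mkCNF evar_raw dvar_raw.
Lemma CNF_eqr : CNF = CNFr.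
Proof. by rewrite /CNF /CNFr /evar /dvar !unlock. Qed.


Definition simp (x : N) (v : bool) (F : seq (seq lit)) : seq (seq lit) :=
  [seq [seq l <- c | ~~ (N.eqb l.2 x && (l.1 != v))] | c <- F &
      ~~ has (fun l : lit => N.eqb l.2 x && (l.1 == v)) c].
Fixpoint unitl (F : seq (seq lit)) : option lit :=
  match F with [::] => None | c :: F' => match c with [:: l] => Some l | _ => unitl F' end end.
Fixpoint choose_aux (F : seq (seq lit)) (acc : option (nat * N)) : option (nat * N) :=
  match F with
  | [::] => acc
  | c :: F' =>
    match c with
    | l :: _ =>
      if all (fun l : lit => l.1) c then
        match acc with
        | Some (n, _) => if size c < n then choose_aux F' (Some (size c, l.2)) else choose_aux F' acc
        | None => choose_aux F' (Some (size c, l.2))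
        end
      else choose_aux F' acc
    | [::] => choose_aux F' acc
    end
  end.
Fixpoint refute (fuel : nat) (F : seq (seq lit)) : bool :=
  if has (fun c : seq lit => if c is [::] then true else false) F then true else
  match fuel with
  | 0 => false
  | k.+1 =>
    match unitl F with
    | Some l => refute k (simp l.2 l.1 F)
    | None => match choose_aux F None with
              | Some (_, x) => refute k (simp x true F) && refute k (simp x false F)
              | None => false
              end
    end
  end.

Arguments adjn : simpl never.
Arguments nbrs : simpl never.
Arguments idx : simpl never.

Definition evl (a : N -> bool) (l : lit) : bool := a l.2 == l.1.
Definition satc (a : N -> bool) (c : seq lit) : bool := has (evl a) c.
Definition satf (a : N -> bool) (F : seq (seq lit)) : bool := all (satc a) F.

Lemma simp_ok a x v F : a x = v -> satf a F -> satf a (simp x v F).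
Proof.
move=> Hx; rewrite /simp /satf; elim: F => //= c F IH /andP [Hc HF].
case: ifP => _ /=; last exact: IH.
rewrite IH // andbT; rewrite /satc.
elim: c Hc => //= l c IHc /orP [Hl|Hc].
  have Hl' : ~~ (N.eqb l.2 x && (l.1 != v)).
    apply/negP => /andP [/N.eqb_eq Ex Hne].
    move: Hl; rewrite /evl Ex Hx => /eqP Ev; by rewrite Ev eqxx in Hne.
  by rewrite Hl' /= Hl.
case: ifP => _ /=; last exact: IHc.
by rewrite IHc ?orbT.
Qed.

Lemma unitl_ok a F l : satf a F -> unitl F = Some l -> evl a l.
Proof.
elim: F => //= c F IH /andP [Hc HF].
case: c Hc => [|l0 [|l1 c]] /= Hc; try exact: IH.
by case=> <-; rewrite orbF in Hc.
Qed.

Lemma refute_ok fuel F a : refute fuel F -> ~~ satf a F.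
Proof.
elim: fuel F => [|k IH] F /=.
  case: ifP => // Hn _; apply/negP => /allP Hall.
  case/hasP: Hn => c Hc; case: c Hc => // Hc _; by have := Hall _ Hc.
case: ifP => Hn.
  move=> _; apply/negP => /allP Hall.
  case/hasP: Hn => c Hc; case: c Hc => // Hc _; by have := Hall _ Hc.
case Hu: (unitl F) => [l|].
  move=> Hr; apply/negP => HF.
  have /eqP Hl := unitl_ok HF Hu.
  by have := IH _ Hr; rewrite simp_ok.
case: (choose_aux F None) => [[_ x]|] // /andP [H1 H2].
apply/negP => HF.
case Hax: (a x).
  by have := IH _ H1; rewrite simp_ok.
by have := IH _ H2; rewrite simp_ok.
Qed.

Lemma Elist_ok : all (fun p => (p.1 < p.2) && (p.2 < 51)) Elist.
Proof. by vm_compute. Qed.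

Lemma adjn_sym u v : adjn u v = adjn v u.
Proof. by rewrite /adjn orbC. Qed.

Lemma adjn_irr u : adjn u u = false.
Proof.
apply/negbTE/negP; rewrite /adjn orbb => H.
by have := allP Elist_ok _ H; rewrite /= ltnn.
Qed.

Lemma adj_mem u v : adjn u v -> [/\ (minn u v, maxn u v) \in Elist, u < 51 & v < 51].
Proof.
case/orP => H; have /andP [h1 h2] := allP Elist_ok _ H; simpl in h1, h2.
  rewrite (minn_idPl (ltnW h1)) (maxn_idPr (ltnW h1)); split => //; lia.
rewrite (minn_idPr (ltnW h1)) (maxn_idPl (ltnW h1)); split => //; lia.
Qed.

Definition Dv (f : rel 'I_51) (v : 'I_51) : bool :=
  [exists u, exists w, (u != w) && f v u && f v w].

Definition asg (f : rel 'I_51) (x : N) : bool :=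
  let i := N.to_nat x in
  if i < nE then f (inord (nth (0,0) Elist i).1) (inord (nth (0,0) Elist i).2)
  else Dv f (inord (i - nE)).

Lemma asg_e f : symmetric f -> forall u v, adjn u v ->
  asg f (evar u v) = f (inord u) (inord v).
Proof.
move=> Hs u v Huv; rewrite /asg /evar unlock /evar_raw Nat2N.id.
have [Hm hu hv] := adj_mem Huv.
have Hi : idx u v < nE by rewrite /idx /nE index_mem.
rewrite Hi /idx nth_index //=.
by case: (leqP u v) => h //; rewrite Hs.
Qed.

Lemma nE_val : nE = 147. Proof. by vm_compute. Qed.

Lemma asg_d f v : asg f (dvar v) = Dv f (inord v).
Proof.
rewrite /asg /dvar unlock /dvar_raw Nat2N.id ltnNge leq_addr /=.
by rewrite addKn.
Qed.

Definition ge (x y : 'I_51) : bool := adjn x y.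

Lemma sf_edge f u v : star_forest ge f -> f u v -> Dv f u -> Dv f v -> False.
Proof.
case=> [[Hsym Hsub] Hc] Huv.
case: (Hc u) => c Hcen.
move/existsP => [u1 /existsP [u2 /andP [/andP [Hne Hu1] Hu2]]].
move/existsP => [v1 /existsP [v2 /andP [/andP [Hne' Hv1] Hv2]]].
have Eu : u = c.
  have H1 := Hcen u u1 (connect0 _ _) Hu1; have H2 := Hcen u u2 (connect0 _ _) Hu2.
  apply/eqP; case: (boolP (u == c)) => // Hn; rewrite (negbTE Hn) /= in H1 H2.
  by move/eqP: H1 => E1; move/eqP: H2 => E2; rewrite E1 E2 eqxx in Hne.
have Cuv : connect f u v by apply: connect1.
have Ev : v = c.
  have H1 := Hcen v v1 Cuv Hv1; have H2 := Hcen v v2 Cuv Hv2.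
  apply/eqP; case: (boolP (v == c)) => // Hn; rewrite (negbTE Hn) /= in H1 H2.
  by move/eqP: H1 => E1; move/eqP: H2 => E2; rewrite E1 E2 eqxx in Hne'.
have := Hsub _ _ Huv; by rewrite Eu Ev /ge adjn_irr.
Qed.

Lemma all_flat (T : Type) (p : pred T) (s : seq (seq T)) :
  all p (flatten s) = all (all p) s.
Proof. by elim: s => //= x s IH; rewrite all_cat IH. Qed.

Lemma mem_nbrs v u : (u \in nbrs v) = (u < 51) && adjn v u.
Proof. by rewrite /nbrs mem_filter mem_iota add0n andbC. Qed.

Lemma lt_neq1 m n : m < n -> m = n -> False.
Proof. by move=> h E; rewrite E ltnn in h. Qed.
Lemma lt_neq2 m n : m < n -> n = m -> False.
Proof. by move=> h E; rewrite E ltnn in h. Qed.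

Lemma k4_of f a b c d : symmetric f -> a < b -> b < c -> c < d -> d < 51 ->
  adjn a b -> adjn a c -> adjn a d -> adjn b c -> adjn b d -> adjn c d ->
  ~~ f (inord a) (inord b) -> ~~ f (inord a) (inord c) -> ~~ f (inord a) (inord d) ->
  ~~ f (inord b) (inord c) -> ~~ f (inord b) (inord d) -> ~~ f (inord c) (inord d) ->
  contains_K4 (delete_edges ge f).
Proof.
move=> Hsym ab bc cd d51 Aab Aac Aad Abc Abd Acd Nab Nac Nad Nbc Nbd Ncd.
have ac := ltn_trans ab bc; have bd := ltn_trans bc cd; have ad := ltn_trans ac cd.
have c51 := ltn_trans cd d51; have b51 := ltn_trans bc c51; have a51 := ltn_trans ab b51.
pose k := fun i : 'I_4 => (inord (nth 0 [:: a; b; c; d] i) : 'I_51).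
have Hinj : injective k.
{ move=> i j E; apply: val_inj; move/(congr1 val): E.
  case: i => [[|[|[|[|i]]]] Hi] //; case: j => [[|[|[|[|j]]]] Hj] //.
  all: try by move: Hi; rewrite !ltnS ltn0.
  all: try by move: Hj; rewrite !ltnS ltn0.
  all: rewrite /k /= ?inordK //.
  all: move=> E; exfalso.
  all: first [ exact: (lt_neq1 ab E) | exact: (lt_neq1 ac E) | exact: (lt_neq1 ad E)
             | exact: (lt_neq1 bc E) | exact: (lt_neq1 bd E) | exact: (lt_neq1 cd E)
             | exact: (lt_neq2 ab E) | exact: (lt_neq2 ac E) | exact: (lt_neq2 ad E)
             | exact: (lt_neq2 bc E) | exact: (lt_neq2 bd E) | exact: (lt_neq2 cd E) ]. }
exists k; split => // i j.
case: i => [[|[|[|[|i]]]] Hi] //; case: j => [[|[|[|[|j]]]] Hj] // _.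
all: try by move: Hi; rewrite !ltnS ltn0.
all: try by move: Hj; rewrite !ltnS ltn0.
all: rewrite /delete_edges /ge /k /= !inordK //.
all: apply/andP; split; first [done | rewrite adjn_sym; done | rewrite Hsym; done].
Qed.

Lemma CNFr_unsat : refute 1000 CNFr.
Proof. by vm_compute. Qed.

Lemma CNF_eq : CNF = k4clG evar ++ pathclG evar dvar ++ edgeclG evar dvar. Proof. by []. Qed.
Lemma quads_eq : quads =
  flatten [seq flatten [seq flatten [seq [seq (a,b,c,d) | d <- nbrs a & (c < d) && adjn b d && adjn c d]
     | c <- nbrs a & (b < c) && adjn b c] | b <- nbrs a & a < b] | a <- iota 0 nV].
Proof. by []. Qed.
Opaque CNF quads nbrs.
Arguments asg : simpl never.
Arguments Dv : simpl never.
Lemma adjn_of_mem a b : (a, b) \in Elist -> adjn a b.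
Proof. by rewrite /adjn => ->. Qed.


Lemma cnf_sat f : star_forest ge f -> ~ contains_K4 (delete_edges ge f) -> satf (asg f) CNF.
Proof.
move=> Hsf HK; have Hsym : symmetric f := Hsf.1.1.
rewrite /satf CNF_eq 2!all_cat; apply/and3P; split.
{ rewrite /k4clG all_map; apply/allP => q; rewrite quads_eq.
  move=> /flatten_mapP [a Ha /flatten_mapP [b Hb /flatten_mapP [c Hc /mapP [d Hd ->]]]].
  rewrite mem_filter in Hb; rewrite mem_filter in Hc; rewrite mem_filter in Hd.
  move: Hb Hc Hd => /andP[ab Hb] /andP[/andP[bc Abc] Hc] /andP[/andP[/andP[cd Abd] Acd] Hd].
  rewrite mem_nbrs in Hb; rewrite mem_nbrs in Hc; rewrite mem_nbrs in Hd.
  case/andP: Hb => b51 Aab; case/andP: Hc => c51 Aac; case/andP: Hd => d51 Aad.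
  rewrite /satc /evl /=.
  rewrite (asg_e Hsym Aab) (asg_e Hsym Aac) (asg_e Hsym Aad) (asg_e Hsym Abc) (asg_e Hsym Abd) (asg_e Hsym Acd).
  rewrite !eqb_id orbF.
  apply: contraT => H; exfalso; apply: HK.
  apply: (k4_of Hsym ab bc cd d51 Aab Aac Aad Abc Abd Acd).
  all: apply/negP => h; move/negP: H; apply; by rewrite h ?orbT. }
{ rewrite /pathclG all_flat all_map; apply/allP => v Hv /=.
  rewrite all_flat all_map; apply/allP => u Hu /=.
  rewrite all_map; apply/allP => w Hw /=.
  rewrite mem_filter in Hw; case/andP: Hw => uw Hw.
  rewrite mem_nbrs in Hu; rewrite mem_nbrs in Hw.
  case/andP: Hu => u51 Avu; case/andP: Hw => w51 Avw.
  have Auv : adjn u v by rewrite adjn_sym.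
  rewrite /satc /= /evl /= (asg_e Hsym Auv) (asg_e Hsym Avw) asg_d.
  case Fuv: (f (inord u) (inord v)) => //=; case Fvw: (f (inord v) (inord w)) => //=.
  rewrite orbF; apply/eqP/existsP; exists (inord u); apply/existsP; exists (inord w).
  rewrite Fvw andbT Hsym Fuv andbT.
  apply/eqP => /(congr1 val); rewrite /= !inordK // => E; by rewrite E ltnn in uw. }
{ rewrite /edgeclG all_map; apply/allP => [[a b]] Hab /=.
  have Aab : adjn a b by apply: adjn_of_mem.
  rewrite /satc /= /evl /= (asg_e Hsym Aab) !asg_d.
  case Fab: (f (inord a) (inord b)) => //=.
  case Da: (Dv f (inord a)) => //=; case Db: (Dv f (inord b)) => //=.
  exfalso; exact: (sf_edge Hsf Fab Da Db). }
Qed.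

Definition PZ (i : nat) : Z * Z := nth (0%Z, 0%Z) Plist i.
Definition ptZ (z : Z * Z) : Defs.point := (IZR z.1, IZR z.2).
Definition posn (i : nat) : Defs.point := ptZ (PZ i).
Definition orientZ (p q r : Z * Z) : Z :=
  ((q.1 - p.1) * (r.2 - p.2) - (q.2 - p.2) * (r.1 - p.1))%Z.
Definition okZ (p q r s : Z * Z) : bool :=
  let a := orientZ p q r in let b := orientZ p q s in
  ((0 <=? a)%Z && (0 <=? b)%Z && (0 <? a + b)%Z) || ((a <=? 0)%Z && (b <=? 0)%Z && (a + b <? 0)%Z).

Definition chk_inj : bool :=
  all (fun i => all (fun j => (i == j) || ~~ (((PZ i).1 =? (PZ j).1)%Z && ((PZ i).2 =? (PZ j).2)%Z))
     (iota 0 51)) (iota 0 51).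
Definition chk_vert : bool :=
  all (fun p => all (fun z => (z == p.1) || (z == p.2) || ~~ (orientZ (PZ p.1) (PZ p.2) (PZ z) =? 0)%Z)
     (iota 0 51)) Elist.
Definition chk_pairs : bool :=
  all (fun e1 => all (fun e2 => (e1 == e2) || okZ (PZ e1.1) (PZ e1.2) (PZ e2.1) (PZ e2.2)
                                || okZ (PZ e2.1) (PZ e2.2) (PZ e1.1) (PZ e1.2)) Elist) Elist.

Lemma chk_inj_ok : chk_inj. Proof. by vm_compute. Qed.
Lemma chk_vert_ok : chk_vert. Proof. by vm_compute. Qed.
Lemma chk_pairs_ok : chk_pairs. Proof. by vm_compute. Qed.

Section Planar.
Local Open Scope R_scope.

Lemma orient_IZR p q r : orient (ptZ p) (ptZ q) (ptZ r) = IZR (orientZ p q r).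
Proof. by rewrite /orient /orientZ /ptZ /= minus_IZR !mult_IZR !minus_IZR. Qed.

Lemma okZ_R p q r s : okZ p q r s -> okR (ptZ p) (ptZ q) (ptZ r) (ptZ s).
Proof.
rewrite /okZ /okR !orient_IZR.
case/orP => /andP [/andP [h1 h2] h3]; [left|right].
- move/Z.leb_le: h1 => h1; move/Z.leb_le: h2 => h2; move/Z.ltb_lt: h3 => h3.
  rewrite -plus_IZR; split; [|split]; [apply: IZR_le|apply: IZR_le|apply: IZR_lt]; lia.
- move/Z.leb_le: h1 => h1; move/Z.leb_le: h2 => h2; move/Z.ltb_lt: h3 => h3.
  rewrite -plus_IZR; split; [|split]; [apply: IZR_le|apply: IZR_le|apply: IZR_lt]; lia.
Qed.

Definition pos (i : 'I_51) : Defs.point := posn i.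

Lemma pos_inj : injective pos.
Proof.
move=> i j; rewrite /pos /posn /ptZ => -[/eq_IZR E1 /eq_IZR E2].
apply: val_inj => /=.
have := allP (allP chk_inj_ok i _) j.
rewrite !mem_iota !add0n !ltn_ord => /(_ erefl) /(_ erefl).
by rewrite E1 E2 !Z.eqb_refl /= orbF => /eqP.
Qed.

Lemma seg_pair_E a b c d s t : (a, b) \in Elist -> (c, d) \in Elist -> (a, b) != (c, d) ->
  0 < s < 1 -> 0 < t < 1 -> seg (posn a) (posn b) s <> seg (posn c) (posn d) t.
Proof.
move=> Hab Hcd Hne Hs Ht.
have := allP (allP chk_pairs_ok _ Hab) _ Hcd; rewrite (negbTE Hne) /= => /orP [H|H].
  exact: (seg_disj Ht (okZ_R H)).
move=> E; symmetry in E; exact: (seg_disj Hs (okZ_R H) E).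
Qed.

Lemma seg_vert_E a b z t : (a, b) \in Elist -> (z < 51)%nat -> z != a -> z != b ->
  seg (posn a) (posn b) t <> posn z.
Proof.
move=> Hab Hz Ha Hb; apply: seg_vert.
have := allP (allP chk_vert_ok _ Hab) z; rewrite mem_iota add0n Hz /= (negbTE Ha) (negbTE Hb) /=.
move=> /(_ erefl) H; rewrite /posn orient_IZR => E.
by move: H; rewrite (eq_IZR _ _ E).
Qed.

Lemma normE (x y : 'I_51) s : adjn x y -> 0 < s < 1 ->
  exists a b s', [/\ (a, b) \in Elist, ((a == x) && (b == y)) || ((a == y) && (b == x)),
                   0 < s' < 1 & seg (pos x) (pos y) s = seg (posn a) (posn b) s'].
Proof.
move=> /orP [H|H] Hs.
  by exists (nat_of_ord x), (nat_of_ord y), s; split => //; rewrite !eqxx.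
exists (nat_of_ord y), (nat_of_ord x), (1 - s); split => //; first by rewrite !eqxx orbT.
  lra.
by rewrite seg_rev.
Qed.

End Planar.

Section Final.
Local Open Scope R_scope.

Lemma planar_ge : planar ge.
Proof.
exists pos, (fun x y => seg (pos x) (pos y)).
split; first exact: pos_inj.
split.
{ move=> x y Hxy.
  have Hne : pos x <> pos y.
  { move/pos_inj => E; move: Hxy; by rewrite E /ge adjn_irr. }
  split.
  { exact: seg_cont. }
  { split; [exact: seg0 | exact: seg1]. }
  { move=> s t _ _; exact: seg_inj. }
  { move=> t; exact: seg_rev. }
  move=> t z /andP [/RltP h0 /RltP h1].
  case: (eqVneq z x) => [->|Hzx]; first exact: seg_end_p.
  case: (eqVneq z y) => [->|Hzy]; first exact: seg_end_q.
  have [a [b [s' [Hab Eab Hs' ->]]]] := normE Hxy (conj h0 h1).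
  apply: seg_vert_E Hab (ltn_ord z) _ _.
  all: case/orP: Eab => /andP [/eqP Ea /eqP Eb]; rewrite ?Ea ?Eb val_eqE //. }
move=> x y u v Hxy Huv Hne s t /andP [/RltP hs0 /RltP hs1] /andP [/RltP ht0 /RltP ht1].
have [a [b [s' [Hab Eab Hs' ->]]]] := normE Hxy (conj hs0 hs1).
have [c [d [t' [Hcd Ecd Ht' ->]]]] := normE Huv (conj ht0 ht1).
apply: seg_pair_E => //.
apply/negP => /eqP [Eac Ebd]; apply: Hne.
have Exu : forall p q : 'I_51, (p : nat) = q -> p == q by move=> p q E; apply/eqP/val_inj.
move: Eab Ecd; rewrite -Eac -Ebd.
case/orP => /andP [/eqP Ea /eqP Eb]; case/orP => /andP [/eqP Ea' /eqP Eb'].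
- by apply/orP; left; apply/andP; split; apply: Exu; congruence.
- by apply/orP; right; apply/andP; split; apply: Exu; congruence.
- by apply/orP; right; apply/andP; split; apply: Exu; congruence.
- by apply/orP; left; apply/andP; split; apply: Exu; congruence.
Qed.

End Final.

Theorem theorem7 :
  exists (T : finType) (e : rel T),
    simple_graph e /\ planar e /\
    forall f : rel T, star_forest e f -> contains_K4 (delete_edges e f).
Proof.
exists ('I_51 : finType), ge.
split.
  split; [move=> x y; exact: adjn_sym | move=> x; exact: adjn_irr].
split; first exact: planar_ge.
move=> f Hf.
case: (Classical_Prop.classic (contains_K4 (delete_edges ge f))) => // HK.
exfalso.
have H1 : refute 1000 CNF by rewrite CNF_eqr; exact: CNFr_unsat.
have := @refute_ok 1000 CNF (asg f) H1.
by rewrite cnf_sat.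
Qed.
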